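(* Let $Q$ be a subring of $\mathbb{R}$ containing $1$, let $R = Q \times Q$ with coordinatewise addition and multiplication $(a,b)\cdot(c,d) = (ac, ad + bc)$, and consider the Frobenius template $(A(Q), C(Q), U(Q))$ in $R$, where $A(Q) = (Q \cap (0,\infty)) \times (Q \cap [0,\infty))$ and $C(Q) = U(Q) = (Q \cap [0,\infty))^2$. Let $n$ be a positive integer and let $(\alpha_1, \dots, \alpha_n)$ be a list in $A(Q) \setminus (Q \times \{0\})$ (i.e. $\alpha_i = (a_i, b_i)$ with $a_i > 0$ and $b_i > 0$ for all $i$). Then $\mathrm{Frob}(\alpha_1, \dots, \alpha_n) = \emptyset$.
   Context: $R$ is isomorphic to the ring of upper triangular $2\times 2$ matrices over $Q$ with constant diagonal, and is commutative. For a list $(\alpha_1,\dots,\alpha_n)$ in $A(Q)$, $MN(\alpha_1, \dots, \alpha_n) = \{\sum_{i=1}^n \alpha_i \lambda_i : \lambda_1, \dots, \lambda_n \in C(Q)\}$ (product in $R$), and $\mathrm{Frob}(\alpha_1, \dots, \alpha_n) = \{w \in R : w + U(Q) \subseteq MN(\alpha_1, \dots, \alpha_n)\}$, where $w + U(Q) = \{w + u : u \in U(Q)\}$. *)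

(* Defs.v *)
From mathcomp Require Import all_boot all_order all_algebra.
From mathcomp Require Import reals.
Set Implicit Arguments. Unset Strict Implicit. Unset Printing Implicit Defensive.
Import Order.TTheory GRing.Theory Num.Theory.
Local Open Scope ring_scope.

Section Defs.
Variable R : realType.

Definition is_subring (Q : pred R) : Prop :=
  [/\ 1 \in Q,
      (forall x y, x \in Q -> y \in Q -> x - y \in Q) &
      (forall x y, x \in Q -> y \in Q -> x * y \in Q)].

(* the ring R = Q x Q : elements are pairs of reals with coordinates in Q *)
Definition inQ2 (Q : pred R) (w : R * R) : Prop := w.1 \in Q /\ w.2 \in Q.

Definition padd (x y : R * R) : R * R := (x.1 + y.1, x.2 + y.2).
Definition pmul (x y : R * R) : R * R := (x.1 * y.1, x.1 * y.2 + x.2 * y.1).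

Definition inA (Q : pred R) (x : R * R) : Prop :=
  [/\ x.1 \in Q, 0 < x.1, x.2 \in Q & 0 <= x.2].

Definition inC (Q : pred R) (x : R * R) : Prop :=
  [/\ x.1 \in Q, 0 <= x.1, x.2 \in Q & 0 <= x.2].

Definition inU (Q : pred R) (x : R * R) : Prop := inC Q x.

Definition MN (Q : pred R) (n : nat) (alpha : 'I_n -> R * R) (v : R * R) : Prop :=
  exists lam : 'I_n -> R * R, (forall i, inC Q (lam i)) /\
    v = (\sum_(i < n) (pmul (alpha i) (lam i)).1,
         \sum_(i < n) (pmul (alpha i) (lam i)).2).

Definition Frob (Q : pred R) (n : nat) (alpha : 'I_n -> R * R) (w : R * R) : Prop :=
  inQ2 Q w /\ forall u, inU Q u -> MN Q alpha (padd w u).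

End Defs.

(* Main.v *)
Require Import Defs.
From mathcomp Require Import all_boot all_order all_algebra.
From mathcomp Require Import reals.
Import Order.TTheory GRing.Theory Num.Theory.
Local Open Scope ring_scope.

Lemma natQ {R : realType} (Q : pred R) (hQ : is_subring Q) (k : nat) :
  (k%:R : R) \in Q.
Proof.
case: hQ => h1 hB _.
have h0 : (0 : R) \in Q by rewrite -(subrr 1); apply: hB.
have hm1 : (-1 : R) \in Q by rewrite -sub0r; apply: hB.
elim: k => [|k IH] //.
rewrite -addn1 natrD.
have -> : (k%:R + 1 : R) = k%:R - (-1) by rewrite opprK.
exact: hB.
Qed.

Theorem proposition4p1 (R : realType) (Q : pred R) (hQ : is_subring Q)
  (n : nat) (hn : (0 < n)%N) (alpha : 'I_n -> R * R)
  (hA : forall i, inA Q (alpha i)) (hb : forall i, (alpha i).2 != 0) :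
  forall w : R * R, ~ Frob Q alpha w.
Proof.
move=> w [_ HF].
set S := \sum_(i < n) (alpha i).1 / (alpha i).2.
have bpos : forall i, 0 < (alpha i).2.
  by move=> i; case: (hA i) => _ _ _ h; rewrite lt_def hb h.
have apos : forall i, 0 < (alpha i).1 by move=> i; case: (hA i).
have termpos : forall i, 0 < (alpha i).1 / (alpha i).2.
  by move=> i; rewrite divr_gt0.
have Sle : forall i, (alpha i).1 / (alpha i).2 <= S.
  move=> i; rewrite /S (bigD1 i) //= lerDl sumr_ge0 // => j _.
  exact: ltW.
have Spos : 0 < S.
  apply: lt_le_trans (Sle (Ordinal hn)); exact: termpos.
set N := Num.Def.archi_bound `|S * w.2 - w.1|.
have HN : S * w.2 - w.1 < N%:R.
  apply: le_lt_trans (ler_norm _) _; exact: archi_boundP.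
have [lam [Hlam Heq]] := HF (N%:R, 0) (And4 (@natQ R Q hQ N) (ler0n _ _) (@natQ R Q hQ 0) (lexx 0)).
case: Heq => /= E1 E2.
have key : forall i, (pmul (alpha i) (lam i)).1 / S <= (pmul (alpha i) (lam i)).2.
  move=> i; case: (Hlam i) => _ c0 _ d0; rewrite /pmul /=.
  have := Sle i; have := bpos i; have := apos i; move: c0 d0 Spos.
  move: (alpha i).1 (alpha i).2 (lam i).1 (lam i).2 => a b c d c0 d0 Sp ap bp.
  rewrite ler_pdivrMr // => H.
  rewrite ler_pdivrMr // mulrDl.
  have h1 : 0 <= a * d * S by rewrite !mulr_ge0 // ltW.
  have h2 : a * c <= b * c * S.
    by rewrite mulrAC ler_wpM2r // mulrC.
  by rewrite -[a * c]add0r lerD.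
have : (w.1 + N%:R) / S <= w.2 + 0.
  rewrite E1 E2 mulr_suml; apply: ler_sum => i _; exact: key.
rewrite addr0 ler_pdivrMr // => H.
move: HN; rewrite ltNge => /negP; apply.
by rewrite lerBrDr mulrC addrC.
Qed.
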